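(* Let $1\le r\le s\le t$ and let $u=ABCd$, $v=A'B'C'd'$ be vertices of $E3C(r,s,t)$ with $A=A'$, $B\ne B'$, $C\ne C'$ and $d=d'$. Then there exist $2r+2$ pairwise internally disjoint $u$–$v$ paths in $E3C(r,s,t)$, each of length at most $s+t+7$ if $d\in\{0,1\}$, and each of length at most $s+t+5$ if $d=2$.
   Context: The exchanged 3-ary $n$-cube $E3C(r,s,t)$ ($r,s,t\ge1$, $n=r+s+t+1$): vertices are strings written $x=ABCd$ with $A\in\{0,1,2\}^r$, $B\in\{0,1,2\}^s$, $C\in\{0,1,2\}^t$, $d\in\{0,1,2\}$. Two distinct vertices $x=ABCd$, $y=A'B'C'd'$ are adjacent iff one of: (E0) $A=A',B=B',C=C'$ and $d\ne d'$; (E1) $d=d'=0$, $A=A'$, $B=B'$ and $C,C'$ differ in exactly one position; (E2) $d=d'=1$, $A=A'$, $C=C'$ and $B,B'$ differ in exactly one position; (E3) $d=d'=2$, $B=B'$, $C=C'$ and $A,A'$ differ in exactly one position. Paths are internally disjoint if they share no vertices other than their endpoints; length = number of edges. *)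

(* Defs.v *)
From mathcomp Require Import all_boot.
Set Implicit Arguments. Unset Strict Implicit. Unset Printing Implicit Defensive.

Definition word (n : nat) := {ffun 'I_n -> 'I_3}.

Definition differ1 n (X Y : word n) : bool := #|[set i | X i != Y i]| == 1.

Definition vtx (r s t : nat) := (word r * word s * word t * 'I_3)%type.

Definition e3c_adj (r s t : nat) : rel (vtx r s t) := fun x y =>
  let '(A, B, C, d) := x in
  let '(A', B', C', d') := y in
  [|| [&& A == A', B == B', C == C' & d != d'],
      [&& val d == 0, val d' == 0, A == A', B == B' & differ1 C C'],
      [&& val d == 1, val d' == 1, A == A', C == C' & differ1 B B']
    | [&& val d == 2, val d' == 2, B == B', C == C' & differ1 A A'] ].

(* A u-v path is given by the list q of vertices after u (so the path is
   u :: q); it is simple, follows edges, and ends at v. Its length is size q. *)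
Definition e3c_path r s t (u v : vtx r s t) (q : seq (vtx r s t)) : bool :=
  [&& path (@e3c_adj r s t) u q, last u q == v & uniq (u :: q)].

Definition interior r s t (v : vtx r s t) (q : seq (vtx r s t)) :=
  [seq x <- q | x != v].

Definition int_disjoint r s t (v : vtx r s t) (q1 q2 : seq (vtx r s t)) : bool :=
  ~~ has (fun x => x \in interior v q2) (interior v q1).

(* Main.v *)
Require Import Defs.
From mathcomp Require Import all_boot zify.
Set Implicit Arguments. Unset Strict Implicit. Unset Printing Implicit Defensive.


Lemma cnt_enum (T : finType) (P : pred T) : count P (enum T) = #|P|.
Proof. by rewrite cardE /enum_mem size_filter count_filter; apply: eq_count => x; rewrite /= andbT. Qed.

Definition upd n (X : word n) (m : 'I_n) (v : 'I_3) : word n :=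
  [ffun i => if i == m then v else X i].

Lemma upd_at n (X : word n) m v : upd X m v m = v.
Proof. by rewrite /upd ffunE eqxx. Qed.
Lemma upd_ne n (X : word n) m v i : i != m -> upd X m v i = X i.
Proof. by rewrite /upd ffunE => /negbTE ->. Qed.

Lemma differ1_upd n (X : word n) m v : X m != v -> differ1 X (upd X m v).
Proof.
move=> H; rewrite /differ1; have -> : [set i | X i != upd X m v i] = [set m].
  apply/setP => i; rewrite !inE /upd ffunE; case: (eqVneq i m) => [->|]; first by rewrite H.
  by rewrite eqxx.
by rewrite cards1.
Qed.

Lemma differ1_sym n (X Y : word n) : differ1 X Y = differ1 Y X.
Proof.
rewrite /differ1; congr (_ == _); apply: eq_card => i; by rewrite !inE eq_sym.
Qed.

Fixpoint wk n (Y X : word n) (ms : seq 'I_n) : seq (word n) :=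
  if ms is m :: ms' then
    if X m == Y m then wk Y X ms' else upd X m (Y m) :: wk Y (upd X m (Y m)) ms'
  else [::].

Definition walk n (X Y : word n) := wk Y X (enum 'I_n).

Lemma wk_path n (Y X : word n) ms : path (@differ1 n) X (wk Y X ms).
Proof.
elim: ms X => [|m ms IH] X //=; case: ifP => H //=.
by rewrite IH andbT differ1_upd // H.
Qed.

Lemma wk_last n (Y X : word n) ms :
  last X (wk Y X ms) = [ffun i => if i \in ms then Y i else X i].
Proof.
elim: ms X => [|m ms IH] X /=.
  by apply/ffunP => i; rewrite ffunE.
case: ifP => H /=; rewrite IH; apply/ffunP => i; rewrite ?ffunE inE.
  by case: (eqVneq i m) => [->|] //=; rewrite (eqP H); case: (m \in ms).
by case: (eqVneq i m) => [->|] //=; case: (m \in ms).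
Qed.

Lemma walk_last n (X Y : word n) : last X (walk X Y) = Y.
Proof. by rewrite /walk wk_last; apply/ffunP => i; rewrite ffunE mem_enum. Qed.

Lemma wk_size n (Y X : word n) ms : size (wk Y X ms) <= count (fun i => X i != Y i) ms.
Proof.
elim: ms X => [|m ms IH] X //=; case: ifP => H /=.
  by rewrite add0n IH.
rewrite add1n ltnS; apply: leq_trans (IH _) _; apply: sub_count => i /=.
rewrite /upd ffunE; case: (eqVneq i m) => [->|] //; by rewrite eqxx.
Qed.

Lemma walk_size n (X Y : word n) : size (walk X Y) <= #|[pred i | X i != Y i]|.
Proof. by rewrite /walk -cnt_enum; apply: wk_size. Qed.

Lemma walk_size' n (X Y : word n) : size (walk X Y) <= n.
Proof. apply: leq_trans (walk_size X Y) _; by apply: leq_trans (max_card _) _; rewrite card_ord. Qed.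

Lemma wk_mem n (Y X : word n) ms W : W \in wk Y X ms ->
  exists k, W = [ffun i => if i \in take k ms then Y i else X i].
Proof.
elim: ms X => [|m ms IH] X //=; case: ifP => H.
  move=> /IH [k ->]; exists k.+1; apply/ffunP => i; rewrite !ffunE /= inE.
  by case: (eqVneq i m) => [->|] //=; rewrite (eqP H); case: (_ \in _).
rewrite inE => /orP [/eqP ->|/IH [k ->]].
  exists 1; apply/ffunP => i; rewrite /upd !ffunE /= inE.
  by rewrite take0 orbF; case: (eqVneq i m) => [->|].
exists k.+1; apply/ffunP => i; rewrite /upd !ffunE /= inE.
by case: (eqVneq i m) => [->|] //=; case: (_ \in _).
Qed.

Lemma walk_mem n (X Y : word n) W : W \in walk X Y ->
  exists k, W = [ffun i : 'I_n => if val i < k then Y i else X i].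
Proof.
move=> /wk_mem [k ->]; exists k; apply/ffunP => i; rewrite !ffunE.
by rewrite in_take ?mem_enum // index_enum_ord.
Qed.

Lemma walk_mix n (X Y : word n) W i : W \in walk X Y -> W i = X i \/ W i = Y i.
Proof. move=> /walk_mem [k ->]; rewrite ffunE; case: ifP; by [right|left]. Qed.

Definition mono n (X Y W : word n) :=
  forall i1 i2 : 'I_n, i1 < i2 -> X i2 != Y i2 -> W i2 = Y i2 -> W i1 = Y i1.

Lemma walk_mono n (X Y : word n) W : W \in walk X Y -> mono X Y W.
Proof.
move=> /walk_mem [k ->] i1 i2 lt12 ne; rewrite !ffunE.
case: ifP => H2; last by move=> E; rewrite E eqxx in ne.
by rewrite (ltn_trans lt12 H2).
Qed.

Lemma mono_self n (X Y : word n) : mono X Y X.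
Proof. by move=> i1 i2 _ ne E; rewrite E eqxx in ne. Qed.


Definition L0 : 'I_3 := @Ordinal 3 0 isT.
Definition L1 : 'I_3 := @Ordinal 3 1 isT.
Definition L2 : 'I_3 := @Ordinal 3 2 isT.

Section Adj.
Context (r s t : nat).
Implicit Types (A : word r) (B : word s) (C : word t).

Lemma adjD A B C (d d' : 'I_3) : d != d' -> @e3c_adj r s t (A,B,C,d) (A,B,C,d').
Proof. by move=> H; rewrite /e3c_adj !eqxx H. Qed.

Lemma adj0 A B C C' : differ1 C C' -> @e3c_adj r s t (A,B,C,L0) (A,B,C',L0).
Proof. by move=> H; rewrite /e3c_adj !eqxx H /= orbT. Qed.

Lemma adj1 A B B' C : differ1 B B' -> @e3c_adj r s t (A,B,C,L1) (A,B',C,L1).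
Proof. by move=> H; rewrite /e3c_adj !eqxx H /= !orbT. Qed.

Lemma adj2 A A' B C : differ1 A A' -> @e3c_adj r s t (A,B,C,L2) (A',B,C,L2).
Proof. by move=> H; rewrite /e3c_adj !eqxx H /= !orbT. Qed.

Lemma path0g A B X (l : seq (word t)) : path (@differ1 t) X l ->
  path (@e3c_adj r s t) (A,B,X,L0) [seq (A,B,W,L0) | W <- l].
Proof. elim: l X => [|W l IH] X // /andP [H1 H2]; apply/andP; split; [exact: adj0 | exact: IH]. Qed.

Lemma path1g A C X (l : seq (word s)) : path (@differ1 s) X l ->
  path (@e3c_adj r s t) (A,X,C,L1) [seq (A,W,C,L1) | W <- l].
Proof. elim: l X => [|W l IH] X // /andP [H1 H2]; apply/andP; split; [exact: adj1 | exact: IH]. Qed.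

Lemma path0 A B C C' : path (@e3c_adj r s t) (A,B,C,L0) [seq (A,B,W,L0) | W <- walk C C'].
Proof. exact/path0g/wk_path. Qed.

Lemma path1 A B B' C : path (@e3c_adj r s t) (A,B,C,L1) [seq (A,W,C,L1) | W <- walk B B'].
Proof. exact/path1g/wk_path. Qed.

Lemma last0 A B C C' X : last X [seq (A,B,W,L0) | W <- walk C C'] =
   if walk C C' is [::] then X else (A,B,C',L0).
Proof.
case E: (walk C C') => [|W l] //=. rewrite (last_map (fun W => (A,B,W,L0)) l W).
by rewrite -(walk_last C C') E.
Qed.
End Adj.

Section Fin.
Context (r s t : nat).
Lemma finish (u v : vtx r s t) (m : nat) (P : 'I_m -> seq (vtx r s t))
  (Q : 'I_m -> vtx r s t -> Prop) (bnd : nat) :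
  (forall i, path (@e3c_adj r s t) u (P i) /\ last u (P i) = v /\ size (P i) <= bnd) ->
  (forall i x, x \in P i -> x != v -> Q i x) ->
  (forall i j x, Q i x -> Q j x -> i = j) ->
  exists P' : 'I_m -> seq (vtx r s t),
    (forall i, e3c_path u v (P' i) /\ size (P' i) <= bnd) /\
    (forall i j, i != j -> int_disjoint v (P' i) (P' j)).
Proof.
move=> HP HQ HX; exists (fun i => shorten u (P i)); split.
  move=> i; have [p1 [p2 p3]] := HP i; move: p2 p3.
  case: (shortenP p1) => p' pp' up' sub <- sz.
  rewrite /e3c_path pp' eqxx up'; split => //.
  apply: leq_trans sz; apply: uniq_leq_size => //; by case/andP: up'.
move=> i j ij; apply/hasP => -[x].
have [p1 [p2 p3]] := HP i; have [q1 [q2 q3]] := HP j.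
rewrite /interior !mem_filter => /andP [xv xi] /andP [_ xj].
move: xi xj; case: (shortenP p1) => p' _ _ sub xi; have {}xi := sub _ xi.
case: (shortenP q1) => q' _ _ sub' xj; have {}xj := sub' _ xj.
by move/eqP: ij; apply; apply: (HX _ _ x); [apply: HQ xi xv | apply: HQ xj xv].
Qed.
End Fin.


Definition add3 (x : 'I_3) (a : nat) : 'I_3 := inord ((x + a) %% 3).

Lemma add3_val x a : val (add3 x a) = (x + a) %% 3.
Proof. by rewrite /add3 /= inordK // ltn_pmod. Qed.

Lemma add3_ne (x : 'I_3) a : 0 < a < 3 -> add3 x a != x.
Proof.
move=> Ha; apply/eqP => /(congr1 val); rewrite add3_val.
case: x => [[|[|[|]]]] //= _; case: a Ha => [|[|[|]]] //.
Qed.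

Lemma add3_inj (x : 'I_3) a b : 0 < a < 3 -> 0 < b < 3 -> add3 x a = add3 x b -> a = b.
Proof.
move=> Ha Hb /(congr1 val); rewrite !add3_val.
case: x => [[|[|[|]]]] //= _; case: a Ha => [|[|[|]]] //; case: b Hb => [|[|[|]]] //.
Qed.

Definition tg n (X : word n) (j : 'I_n) a := upd X j (add3 (X j) a).

Lemma tg_ne n (X : word n) j a : 0 < a < 3 -> tg X j a != X.
Proof.
move=> Ha; apply/eqP => E; have := congr1 (fun W : word n => W j) E; rewrite /= /tg upd_at.
by apply/eqP; apply: add3_ne.
Qed.

Lemma tg_differ n (X : word n) j a : 0 < a < 3 -> differ1 X (tg X j a).
Proof. move=> Ha; apply: differ1_upd; rewrite eq_sym; exact: add3_ne. Qed.

Lemma tg_inj n (X : word n) j j' a a' : 0 < a < 3 -> 0 < a' < 3 ->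
  tg X j a = tg X j' a' -> j = j' /\ a = a'.
Proof.
move=> Ha Ha' E; have := congr1 (fun W : word n => W j) E; rewrite /= /tg upd_at.
case: (eqVneq j j') => [<-|ne]; first by rewrite upd_at => /add3_inj; auto.
by rewrite upd_ne // => /eqP; rewrite (negbTE (add3_ne _ Ha)).
Qed.

Lemma idx_eq (R : nat) (m : nat) (i i' : 'I_m) :
  i < 2 * R.+1 -> i' < 2 * R.+1 ->
  (inord (i %/ 2) : 'I_R.+1) = inord (i' %/ 2) -> 1 + i %% 2 = 1 + i' %% 2 -> i = i'.
Proof.
move=> Hi Hi' /(congr1 val); rewrite /= !inordK; try lia.
move=> E1 E2; apply: val_inj => /=; rewrite (divn_eq i 2) (divn_eq i' 2) E1.
lia.
Qed.

Lemma pcons (T : Type) (e : rel T) x y p : path e x (y :: p) = e x y && path e y p.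
Proof. by []. Qed.

Section Lasts.
Context (r s t : nat).
Lemma lastB (A : word r) (C : word t) (B B' : word s) :
  last (A,B,C,L1) [seq (A,W,C,L1) | W <- walk B B'] = (A,B',C,L1).
Proof. by rewrite (last_map (fun W => (A,W,C,L1)) _ B) walk_last. Qed.
Lemma lastC (A : word r) (B : word s) (C C' : word t) :
  last (A,B,C,L0) [seq (A,B,W,L0) | W <- walk C C'] = (A,B,C',L0).
Proof. by rewrite (last_map (fun W => (A,B,W,L0)) _ C) walk_last. Qed.
End Lasts.

Lemma L01 : L0 != L1. Proof. by []. Qed.
Lemma L02 : L0 != L2. Proof. by []. Qed.
Lemma L12 : L1 != L2. Proof. by []. Qed.
Lemma L10 : L1 != L0. Proof. by []. Qed.
Lemma L20 : L2 != L0. Proof. by []. Qed.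
Lemma L21 : L2 != L1. Proof. by []. Qed.

Lemma pair_eq4 (T1 T2 T3 T4 : Type) (a a' : T1) (b b' : T2) (c c' : T3) (d d' : T4) :
  (a,b,c,d) = (a',b',c',d') -> [/\ a = a', b = b', c = c' & d = d'].
Proof. by case. Qed.


Ltac contr := match goal with
  | E : ?a = ?b |- _ => (by move/(congr1 val): E) || fail
  end || (match goal with
  | E : ?a = ?b, H : is_true (?a != ?b) |- _ => by rewrite E eqxx in H
  | E : ?a = ?b, H : is_true (?b != ?a) |- _ => by rewrite E eqxx in H
  end).

Lemma case2 (r s t : nat) (A : word r.+1) (B B' : word s) (C C' : word t) :
  B != B' -> C != C' ->
  exists P : 'I_(2 * r.+1 + 2) -> seq (vtx r.+1 s t),
    (forall i, e3c_path (A, B, C, L2) (A, B', C', L2) (P i) /\ size (P i) <= s + t + 5) /\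
    (forall i j, i != j -> int_disjoint (A, B', C', L2) (P i) (P j)).
Proof.
move=> nB nC.
set R := r.+1.
pose pos (i : nat) : 'I_R := inord (i %/ 2).
pose Ai (i : nat) := tg A (pos i) (1 + i %% 2).
have Ha i : 0 < 1 + i %% 2 < 3 by have := ltn_pmod i (isT : 0 < 2); lia.
pose PT i : seq (vtx R s t) := (Ai i,B,C,L2) :: (Ai i,B,C,L1) :: [seq (Ai i,W,C,L1) | W <- walk B B'] ++
   (Ai i,B',C,L0) :: [seq (Ai i,B',W,L0) | W <- walk C C'] ++ [:: (Ai i,B',C',L2); (A,B',C',L2)].
pose PX : seq (vtx R s t) := (A,B,C,L1) :: [seq (A,W,C,L1) | W <- walk B B'] ++
   (A,B',C,L0) :: [seq (A,B',W,L0) | W <- walk C C'] ++ [:: (A,B',C',L2)].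
pose PY : seq (vtx R s t) := (A,B,C,L0) :: [seq (A,B,W,L0) | W <- walk C C'] ++
   (A,B,C',L1) :: [seq (A,W,C',L1) | W <- walk B B'] ++ [:: (A,B',C',L2)].
pose P (i : 'I_(2 * R + 2)) := if i < 2 * R then PT i else if i == 2 * R :> nat then PX else PY.
pose QX (x : vtx R s t) := let '(a,b,c,d) := x in a = A /\ ((d = L1 /\ c = C) \/ (d = L0 /\ b = B')).
pose QY (x : vtx R s t) := let '(a,b,c,d) := x in a = A /\ ((d = L0 /\ b = B) \/ (d = L1 /\ c = C')).
pose Q (i : 'I_(2 * R + 2)) (x : vtx R s t) :=
  if i < 2 * R then x.1.1.1 = Ai i else if i == 2 * R :> nat then QX x else QY x.
have hb := walk_size' B B'; have hc := walk_size' C C'.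
apply: (finish (P := P) (Q := Q)).
- move=> i; rewrite /P; case: ifP => _; [|case: ifP => _]; rewrite /PT /PX /PY.
  1-3: split; [|split].
  1-9: try (by rewrite !(last_cat, last_cons)).
  1-6: try (by rewrite /= !size_cat /= !size_map; lia).
  1-6: try (by repeat (progress rewrite /= ?size_map ?size_cat); lia).
  1-3: rewrite !(pcons, cat_path, lastB, lastC).
  1-3: rewrite ?(adj2, adjD, path1, path0) ?tg_differ //.
  by rewrite differ1_sym tg_differ.
{ move=> i x; rewrite /P /Q; case: ifP => Hi; [|case: ifP => Hi2]; rewrite /PT /PX /PY.
all: rewrite !(inE, mem_cat) => H xv.
all: repeat (case/orP: H => H); try (move/eqP: H => H; subst x); try (case/mapP: H => W HW ->).
all: try (by rewrite eqxx in xv); rewrite //=.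
all: try (by split; [|left]); try (by split; [|right]).
}
move=> i j [[[a b] c] d]; rewrite /Q /QX /QY /=.
have ord2 (k : 'I_(2 * R + 2)) : k < 2 * R = false -> k == 2 * R :> nat = false -> val k = 2 * R + 1.
  by case: k => k Hk /= h1 h2; move: Hk h1 h2; lia.
case Hi: (i < 2 * R); case Hj: (j < 2 * R) => /=.
- move=> -> /tg_inj [] // E1 E2; exact: idx_eq Hi Hj E1 E2.
- move=> ->; case: ifP => _ [E _]; by move: (tg_ne A (pos i) (Ha i)); rewrite -/(Ai i) E eqxx.
- case: ifP => _ [E _] E'; by move: (tg_ne A (pos j) (Ha j)); rewrite -/(Ai j) -E' E eqxx.
- case Hi2: (i == 2 * R :> nat); case Hj2: (j == 2 * R :> nat) => /=.
  + move=> _ _; apply: ord_inj; by rewrite (eqP Hi2) (eqP Hj2).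
  + move=> [_ [[-> ->]|[-> ->]]] [_ [[E1 E2]|[E1 E2]]]; contr.
  + move=> [_ [[-> ->]|[-> ->]]] [_ [[E1 E2]|[E1 E2]]]; contr.
  + move=> _ _; apply: ord_inj; by rewrite (ord2 _ Hi Hi2) (ord2 _ Hj Hj2).
Qed.


Definition pmax n (C C' : word n) (j : 'I_n) : nat :=
  \max_(k : 'I_n | (C k != C' k) && (k < j)) val k.

Definition pord n (C C' : word n) (j : 'I_n) : 'I_n := insubd j (pmax C C' j).

Lemma pmax_ge n (C C' : word n) (j k : 'I_n) : C k != C' k -> k < j -> k <= pmax C C' j.
Proof. move=> H1 H2; apply: (leq_bigmax_cond (F := fun k : 'I_n => val k)); by rewrite H1. Qed.

Lemma pord_spec n (C C' : word n) (j : 'I_n) :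
  (exists k : 'I_n, C k != C' k /\ k < j) ->
  [/\ C (pord C C' j) != C' (pord C C' j), pord C C' j < j &
      forall k : 'I_n, C k != C' k -> k < j -> k <= pord C C' j].
Proof.
move=> [k0 [H1 H2]].
have Hc : 0 < #|[pred k : 'I_n | (C k != C' k) && (k < j)]|.
  by apply/card_gt0P; exists k0; rewrite inE H1.
have [i0 Hi0 Ei0] := eq_bigmax_cond (fun k : 'I_n => val k) Hc.
have Epm : pmax C C' j = i0 by rewrite /pmax -Ei0.
have E : pord C C' j = i0.
  by apply: val_inj; rewrite /pord /= val_insubd Epm ltn_ord.
rewrite E; move: Hi0; rewrite inE => /andP [-> ->]; split => // k Hk1 Hk2.
by rewrite -Epm pmax_ge.
Qed.

Lemma card_le2 n (X Y : word n) (j p : 'I_n) : j != p -> X j = Y j -> X p = Y p ->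
  #|[pred k | X k != Y k]| <= n - 2.
Proof.
move=> jp Ej Ep.
have H : #|[pred k | X k != Y k]| <= #|~: [set j; p]|.
  apply: subset_leq_card; apply/subsetP => k; rewrite !inE.
  by apply: contra => /orP [/eqP ->|/eqP ->]; rewrite ?Ej ?Ep eqxx.
have := cardsC [set j; p]; rewrite cards2 jp card_ord; lia.
Qed.

Lemma inord_inj_lt n m m' : m < n.+1 -> m' < n.+1 -> (inord m : 'I_n.+1) = inord m' -> m = m'.
Proof. by move=> H H' /(congr1 val); rewrite /= !inordK. Qed.

Lemma idx_eq2 m (i i' : 'I_m) : i %/ 2 = i' %/ 2 -> 1 + i %% 2 = 1 + i' %% 2 -> i = i'.
Proof. move=> E1 E2; apply: val_inj => /=; rewrite (divn_eq i 2) (divn_eq i' 2) E1; lia. Qed.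

Inductive kind (n : nat) := KX | KY | KF | KR of 'I_n & 'I_3 | KT of 'I_n.


Ltac kill := first [ contr | match goal with H : is_true (?x != ?x) |- _ => by rewrite eqxx in H end
  | match goal with H : ?P, H' : ~ ?P |- _ => by case: (H' H) end ].

Lemma ffun_neq n (X Y : word n) i : X i != Y i -> X != Y.
Proof. by apply: contra => /eqP ->. Qed.

Lemma case0 (r s t : nat) (A : word r.+1) (B B' : word s) (C C' : word t.+1) :
  r <= t -> B != B' -> C != C' ->
  exists P : 'I_(2 * r.+1 + 2) -> seq (vtx r.+1 s t.+1),
    (forall i, e3c_path (A, B, C, L0) (A, B', C', L0) (P i) /\ size (P i) <= s + t.+1 + 7) /\
    (forall i j, i != j -> int_disjoint (A, B', C', L0) (P i) (P j)).
Proof.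
move=> rt nB nC.
pose pos (i : nat) : 'I_t.+1 := inord (i %/ 2).
pose cval (i : nat) := add3 (C (pos i)) (1 + i %% 2).
pose Dex (j : 'I_t.+1) := [exists k : 'I_t.+1, (C k != C' k) && (k < j)].
pose kd (i : 'I_(2 * r.+1 + 2)) : kind t.+1 :=
  if i < 2 * r.+1 then
    (if cval i != C' (pos i) then KR (pos i) (cval i)
     else if Dex (pos i) then KT (pos i) else @KF t.+1)
  else if i == 2 * r.+1 :> nat then @KX t.+1 else @KY t.+1.
pose Ay := tg A ord0 2.
pose Aj (j : 'I_t.+1) := tg A (inord (val j)) 1 : word r.+1.
pose Cj (j : 'I_t.+1) := upd C j (C' j).
pose pj (j : 'I_t.+1) := pord C C' j.
pose Ej (j : 'I_t.+1) := upd C' (pj j) (C (pj j)).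
pose v : vtx r.+1 s t.+1 := (A,B',C',L0).
pose PX : seq (vtx r.+1 s t.+1) := (A,B,C,L1) :: [seq (A,W,C,L1) | W <- walk B B'] ++
   (A,B',C,L0) :: [seq (A,B',W,L0) | W <- walk C C'].
pose PY : seq (vtx r.+1 s t.+1) := (A,B,C,L2) :: (Ay,B,C,L2) :: (Ay,B,C,L1) ::
   [seq (Ay,W,C,L1) | W <- walk B B'] ++
   (Ay,B',C,L0) :: [seq (Ay,B',W,L0) | W <- walk C C'] ++ [:: (Ay,B',C',L2); (A,B',C',L2); v].
pose PF : seq (vtx r.+1 s t.+1) := [seq (A,B,W,L0) | W <- walk C C'] ++
   (A,B,C',L1) :: [seq (A,W,C',L1) | W <- walk B B'] ++ [:: v].
pose PR (j : 'I_t.+1) cc : seq (vtx r.+1 s t.+1) := (A,B,upd C j cc,L0) :: (A,B,upd C j cc,L1) ::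
   [seq (A,W,upd C j cc,L1) | W <- walk B B'] ++
   (A,B',upd C j cc,L0) :: [seq (A,B',W,L0) | W <- walk (upd C j cc) (upd C' j cc)] ++ [:: v].
pose PT (j : 'I_t.+1) : seq (vtx r.+1 s t.+1) :=
   (A,B,Cj j,L0) :: (A,B,Cj j,L2) :: (Aj j,B,Cj j,L2) :: (Aj j,B,Cj j,L1) ::
   [seq (Aj j,W,Cj j,L1) | W <- walk B B'] ++
   (Aj j,B',Cj j,L0) :: [seq (Aj j,B',W,L0) | W <- walk (Cj j) (Ej j)] ++
   [:: (Aj j,B',Ej j,L2); (A,B',Ej j,L2); (A,B',Ej j,L0); v].
pose Pk (k : kind t.+1) := match k with
  | KX => PX | KY => PY | KF => PF | KR j cc => PR j cc | KT j => PT j end.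
pose validK (k : kind t.+1) : Prop := match k with
  | KR j cc => cc != C j /\ cc != C' j
  | KT j => [/\ val j < r.+1, C j != C' j & exists k : 'I_t.+1, C k != C' k /\ k < j]
  | _ => True end.
pose mix (c : word t.+1) := forall k, c k = C k \/ c k = C' k.
pose Qk (k : kind t.+1) (x : vtx r.+1 s t.+1) : Prop := let '(a,b,c,d) := x in
  match k with
  | KX => a = A /\ ((d = L1 /\ c = C) \/ (d = L0 /\ b = B' /\ mix c /\ mono C C' c))
  | KY => a = Ay \/ (a = A /\ d = L2 /\ ((b = B /\ c = C) \/ (b = B' /\ c = C')))
  | KF => a = A /\ ((d = L0 /\ b = B /\ mix c /\ mono C C' c) \/ (d = L1 /\ c = C'))
  | KR j cc => a = A /\ d != L2 /\ c j = cc /\ (forall k, k != j -> c k = C k \/ c k = C' k)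
  | KT j => a = Aj j \/ (a = A /\ ((b = B /\ c = Cj j) \/ (b = B' /\ c = Ej j)))
  end.
have Ha i : 0 < 1 + i %% 2 < 3 by have := ltn_pmod i (isT : 0 < 2); lia.
have hp (i : 'I_(2 * r.+1 + 2)) : i < 2 * r.+1 -> val (pos i) = i %/ 2 /\ i %/ 2 < r.+1.
  move=> Hi; have H2 : i %/ 2 < r.+1 by rewrite ltn_divLR //; lia.
  by rewrite /pos /= inordK //; lia.
have Vk : forall i, validK (kd i).
  move=> i; rewrite /kd; case: ifP => Hi; last by case: ifP.
  have [hp1 hp2] := hp i Hi.
  case: ifP => Hc /=; first by split => //; exact: add3_ne.
  move/negbFE/eqP: Hc => Hc.
  case: ifP => Hd //=; split.
  - by rewrite hp1.
  - by rewrite -Hc eq_sym add3_ne.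
  - by move/existsP: Hd => [k /andP [h1 h2]]; exists k.
have Hpath : forall k, validK k ->
  path (@e3c_adj r.+1 s t.+1) (A,B,C,L0) (Pk k) /\ last (A,B,C,L0) (Pk k) = v /\
  size (Pk k) <= s + t.+1 + 7.
{ have hb := walk_size' B B'; have hc := walk_size' C C'.
  move=> [||| j cc | j] V; rewrite /Pk /PX /PY /PF /PR /PT /v.
  all: split; [|split].
  all: try (by rewrite !(last_cat, last_cons) ?lastB ?lastC).
  all: try (by repeat (progress rewrite /= ?size_map ?size_cat); have := walk_size' (upd C j cc) (upd C' j cc); lia).
  all: try (by repeat (progress rewrite /= ?size_map ?size_cat); lia).
  all: try (rewrite !(pcons, cat_path, lastB, lastC); rewrite ?(adj2, adjD, path1, path0, adj0) ?eqxx //).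
  by rewrite differ1_sym tg_differ.
  by apply: tg_differ.
  by case: V => h1 h2; rewrite differ1_sym differ1_upd // eq_sym.
  by case: V => h1 h2; apply: differ1_upd; rewrite eq_sym.
  all: case: V => jr jD ex; have [pD plt pge] := pord_spec ex.
  by rewrite differ1_sym /Ej differ1_upd // eq_sym.
  by rewrite differ1_sym tg_differ.
  by apply: tg_differ.
  by apply: differ1_upd.
  have jp : j != pj j by rewrite neq_ltn plt orbT.
  have E1 : Cj j j = Ej j j by rewrite /Cj /Ej upd_at upd_ne.
  have E2 : Cj j (pj j) = Ej j (pj j) by rewrite /Cj /Ej upd_at upd_ne // eq_sym.
  have := leq_trans (walk_size (Cj j) (Ej j)) (card_le2 jp E1 E2).
  have := ltn_ord j; move: plt.
  repeat (progress rewrite /= ?size_map ?size_cat); lia. }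
have Hmem : forall k x, validK k -> x \in Pk k -> x != v -> Qk k x.
{ move=> [||| j cc | j] x V; rewrite /Pk /PX /PY /PF /PR /PT /v.
  all: rewrite !(inE, mem_cat) => H xv.
  all: repeat (case/orP: H => H); try (move/eqP: H => H; subst x); try (case/mapP: H => W HW ->).
  all: try (by rewrite eqxx in xv).
  all: rewrite /Qk /mix /=.
  all: try (have M1 := fun k => walk_mix k HW; have M2 := walk_mono HW).
  all: try (have M3 := @mono_self _ C C'; by intuition).
  all: split => //; split => //; split; [ | move=> k kj].
  all: try (by rewrite upd_at); try (by rewrite upd_ne //; left).
  all: try (by case: (M1 j); rewrite upd_at).
  all: try (by case: (M1 k); rewrite !upd_ne //; auto).
}
have Hexc : forall k k' x, validK k -> validK k' -> Qk k x -> Qk k' x -> k = k'.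
{ have hAy : Ay != A by apply: tg_ne.
  have hAj (j : 'I_t.+1) : Aj j != A by apply: tg_ne.
  have hAyj (j : 'I_t.+1) : Ay != Aj j by apply/eqP => /tg_inj [] // _.
  have factsT : forall j, validK (KT j) ->
    [/\ Cj j != C, Cj j != C', Ej j != C, Ej j != C' &
     [/\ ~ mono C C' (Cj j), ~ mono C C' (Ej j), mix (Cj j), mix (Ej j) & pj j < j]].
  { move=> j [jr jD ex]; have [pD plt pge] := pord_spec ex.
    have jp : pj j != j by rewrite neq_ltn plt.
    have Cjj : Cj j j = C' j by rewrite /Cj upd_at.
    have Cjp : Cj j (pj j) = C (pj j) by rewrite /Cj upd_ne.
    have Ejj : Ej j j = C' j by rewrite /Ej upd_ne // eq_sym.
    have Ejp : Ej j (pj j) = C (pj j) by rewrite /Ej upd_at.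
    split; [ apply: (ffun_neq (i := j)); rewrite Cjj eq_sym //
           | apply: (ffun_neq (i := pj j)); rewrite Cjp //
           | apply: (ffun_neq (i := j)); rewrite Ejj eq_sym //
           | apply: (ffun_neq (i := pj j)); rewrite Ejp // | split => //].
    - by move=> M; move: (M (pj j) j plt jD Cjj); rewrite Cjp => E; rewrite E eqxx in pD.
    - by move=> M; move: (M (pj j) j plt jD Ejj); rewrite Ejp => E; rewrite E eqxx in pD.
    - by rewrite /mix => k; rewrite /Cj /upd ffunE; case: (eqVneq k j) => [->|_]; [right|left].
    - by rewrite /mix => k; rewrite /Ej /upd ffunE; case: (eqVneq k (pj j)) => [->|_]; [left|right]. }
  have TT : forall j j', validK (KT j) -> validK (KT j') -> j != j' ->
    [/\ Aj j != Aj j', Cj j != Cj j' & Ej j != Ej j'].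
  { move=> j j' [jr jD ex] [jr' jD' ex'] jj.
    have [pD plt pge] := pord_spec ex; have [pD' plt' pge'] := pord_spec ex'.
    split.
    - apply/eqP => /tg_inj [] // E _; move/eqP: jj; apply; apply: val_inj.
      by apply: (inord_inj_lt (n := r)) E.
    - apply: (ffun_neq (i := j)); rewrite /Cj upd_at upd_ne // eq_sym //.
    - have pp : pj j != pj j'.
        apply/eqP => E; case: (ltngtP j j') => H.
        + by have := pge' j jD H; rewrite -/(pj j') -E => h; move: plt; rewrite ltnNge h.
        + by have := pge j' jD' H; rewrite -/(pj j) E => h; move: plt'; rewrite ltnNge h.
        + by move/eqP: jj; apply; apply: val_inj.
      by apply: (ffun_neq (i := pj j)); rewrite /Ej upd_at upd_ne. }
  have nRf : forall j cc, validK (KR j cc) -> forall W : word t.+1, W j = cc ->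
    (forall k, W k = C k \/ W k = C' k) -> False.
  { move=> j cc [h1 h2] W E M; case: (M j); rewrite E => E'.
    - by rewrite E' eqxx in h1.
    - by rewrite E' eqxx in h2. }
  move=> k k' [[[a b] c] d] V V'; rewrite /Qk.
  case: k V => [||| j cc | j] V; case: k' V' => [||| j' cc' | j'] V' /= H1 H2.
  all: try done.
  all: try (have [? ? ? ? [? ? ? ? ?]] := factsT _ V); try (have [? ? ? ? [? ? ? ? ?]] := factsT _ V').
  all: try (have ? := nRf _ _ V); try (have ? := nRf _ _ V').
  all: try (have ? := hAj j); try (have ? := hAj j'); try (have ? := hAyj j); try (have ? := hAyj j').
  all: try (case: (eqVneq j j') => [E | jj]; [subst j'; try done | ]).
  all: try (have [? ? ?] := TT _ _ V V' jj).
  all: repeat match goal with H : _ /\ _ |- _ => destruct H | H : _ \/ _ |- _ => destruct H end.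
  all: try subst a; try subst b; try subst c; try subst d.
  all: try kill.
  all: have mixC : mix C by move=> k; left.
  all: have mixC' : mix C' by move=> k; right.
  all: try (by exfalso; eapply (nRf _ _ V); [eassumption | done]).
  all: try (by exfalso; eapply (nRf _ _ V'); [eassumption | done]).
  by match goal with E1 : ?x = cc, E2 : ?x = cc' |- _ => rewrite -E1 -E2 end.
  exfalso; case: V' => h1 h2; have jj' : j' != j by rewrite eq_sym.
  have [E|E] := H6 j' jj'; rewrite H2 in E.
  - by rewrite E eqxx in h1.
  - by rewrite E eqxx in h2. }
have hfin (i i' : 'I_(2 * r.+1 + 2)) : i < 2 * r.+1 -> i' < 2 * r.+1 ->
    pos i = pos i' -> cval i = cval i' -> i = i'.
  move=> Hi Hi' E1; rewrite /cval E1 => /add3_inj E2.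
  apply: idx_eq2; last by apply: E2.
  by rewrite -(hp i Hi).1 -(hp i' Hi').1 E1.
have inD (i : 'I_(2 * r.+1 + 2)) : (cval i != C' (pos i)) = false -> C (pos i) != C' (pos i).
  by move/negbFE/eqP => <-; rewrite eq_sym add3_ne.
have ord2 (k : 'I_(2 * r.+1 + 2)) : k < 2 * r.+1 = false -> k == 2 * r.+1 :> nat = false ->
    val k = 2 * r.+1 + 1.
  by case: k => k Hk /= h1 h2; move: Hk h1 h2; lia.
have Hinj : forall i i', kd i = kd i' -> i = i'.
  move=> i i'; rewrite /kd.
  case Hi: (i < 2 * r.+1); case Hi': (i' < 2 * r.+1) => /=.
  - case Hc: (cval i != C' (pos i)); case Hc': (cval i' != C' (pos i'));
    case Hd: (Dex (pos i)); case Hd': (Dex (pos i')) => //=.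
    all: try (by case=> E1 E2; apply: hfin).
    all: try (by case=> E1; apply: hfin => //; move/negbFE/eqP: Hc => ->; move/negbFE/eqP: Hc' => ->; rewrite E1).
    move=> _; have E1 : pos i = pos i'.
      case: (ltngtP (pos i) (pos i')) => // H.
      - by move/negbT/existsP: Hd'; case; exists (pos i); rewrite inD.
      - by move/negbT/existsP: Hd; case; exists (pos i'); rewrite inD.
      - by apply: val_inj.
    apply: hfin => //; move/negbFE/eqP: Hc => ->; move/negbFE/eqP: Hc' => ->; by rewrite E1.
  - by repeat (case: ifP => //).
  - by repeat (case: ifP => //).
  - case Hi2: (i == 2 * r.+1 :> nat); case Hi2': (i' == 2 * r.+1 :> nat) => //= _.
    + by apply: ord_inj; rewrite (eqP Hi2) (eqP Hi2').
    + by apply: ord_inj; rewrite (ord2 _ Hi Hi2) (ord2 _ Hi' Hi2').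
apply: (finish (P := fun i => Pk (kd i)) (Q := fun i => Qk (kd i))).
- by move=> i; apply: Hpath.
- by move=> i x; apply: Hmem.
- by move=> i i' x H1 H2; apply: Hinj; apply: (Hexc _ _ x).
Qed.


Definition sw (d : 'I_3) : 'I_3 := if val d == 0 then L1 else if val d == 1 then L0 else d.

Lemma swK : involutive sw.
Proof. by case=> [[|[|[|]]] Hd] //; apply: val_inj. Qed.

Definition swp r s t (x : vtx r s t) : vtx r t s := let '(A,B,C,d) := x in (A,C,B,sw d).

Lemma swpK r s t (x : vtx r s t) : swp (swp x) = x.
Proof. by case: x => [[[A B] C] d] /=; rewrite swK. Qed.

Lemma swp_inj r s t : injective (@swp r s t).
Proof. by move=> x y E; rewrite -(swpK x) -(swpK y) E. Qed.

Lemma swp_adj r s t (x y : vtx r s t) : e3c_adj (swp x) (swp y) = e3c_adj x y.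
Proof.
case: x => [[[A B] C] d]; case: y => [[[A' B'] C'] d'] /=.
rewrite /e3c_adj.
case: d => [[|[|[|]]] Hd] //; case: d' => [[|[|[|]]] Hd'] //=.
all: case: (A == A'); case: (B == B'); case: (C == C'); by [].
Qed.

Lemma path_swp r s t (u v : vtx r s t) p :
  e3c_path u v p -> e3c_path (swp u) (swp v) (map (@swp r s t) p).
Proof.
case/and3P => Hp Hl Hu; apply/and3P; split.
- rewrite path_map; apply: sub_path Hp => x y /=; by rewrite swp_adj.
- by rewrite last_map (eqP Hl).
- by rewrite -map_cons map_inj_uniq //; apply: swp_inj.
Qed.

Lemma interior_swp r s t (v : vtx r s t) p :
  interior (swp v) (map (@swp r s t) p) = map (@swp r s t) (interior v p).
Proof.
rewrite /interior filter_map; congr map; apply: eq_filter => x /=.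
by rewrite (inj_eq (@swp_inj r s t)).
Qed.

Lemma disj_swp r s t (v : vtx r s t) p q :
  int_disjoint v p q -> int_disjoint (swp v) (map (@swp r s t) p) (map (@swp r s t) q).
Proof.
rewrite /int_disjoint !interior_swp has_map; apply: contra => /hasP [x Hx /=].
rewrite mem_map; last by apply: swp_inj.
by move=> H; apply/hasP; exists x.
Qed.

Theorem lemma9 (r s t : nat) (A : word r) (B B' : word s) (C C' : word t)
  (d : 'I_3) :
  1 <= r -> r <= s -> s <= t -> B != B' -> C != C' ->
  exists P : 'I_(2 * r + 2) -> seq (vtx r s t),
    (forall i, e3c_path (A, B, C, d) (A, B', C', d) (P i) /\
       size (P i) <= (if val d == 2 then s + t + 5 else s + t + 7)) /\
    (forall i j, i != j -> int_disjoint (A, B', C', d) (P i) (P j)).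
Proof.
case: r A => [|r] A // _ rs st nB nC.
case: d => [[|[|[|]]] Hd] //.
-
  case: t C C' st nC => [|t] C C' st nC; first by move: rs st; lia.
  have -> : Ordinal Hd = L0 by apply: val_inj.
  by apply: case0 => //; lia.
-
  case: s B B' rs st nB => [|s] B B' rs st nB; first by move: rs; lia.
  have [P [HP HD]] := @case0 r t s A C C' B B' ltac:(lia) nC nB.
  exists (fun i => map (@swp r.+1 t s.+1) (P i)); split.
  + move=> i; have [H1 H2] := HP i; split.
    * have := path_swp H1; have -> : Ordinal Hd = sw L0 by apply: val_inj.
      by [].
    * rewrite size_map /=; move: H2; lia.
  + move=> i j ij; have := disj_swp (HD i j ij).
    by have -> : Ordinal Hd = sw L0 by apply: val_inj.
-
  have -> : Ordinal Hd = L2 by apply: val_inj.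
  exact: case2.
Qed.
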